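(* Let $A$ be a finite alphabet, $n\ge1$, and $L\subseteq (A^\ast)^n$ an $n$-variable language. The following are equivalent: (i) $L$ is the accepted language of an FAA; (ii) $L$ is the accepted language of a DFAA; (iii) $L$ is the accepted language of an SAA.
   Context: $A^\ast$ is the set of finite words over $A$, $[n]=\{1,\ldots,n\}$, $\$$ a new symbol, and $A^\$=(A\sqcup\{\$\})^n\setminus\{(\$,\ldots,\$)\}$ the padded alphabet. Let $E=P(P([n])\setminus\{\emptyset\})$ (sets of filters; a filter is a nonempty subset of $[n]$). An FAA (non-deterministic filter asynchronous automaton) is a quadruple $(S,S_0,\Delta,S_f)$ with $S$ a finite set of states, $S_0\subseteq S$ initial states, $S_f\subseteq S$ accept states, and $\Delta:S\times A^\$\to P(S)\times E$, such that for all $\overline\sigma=(\sigma_1,\ldots,\sigma_n)\in A^\$$ and $s\in S$, if $\sigma_i=\$$ and the set of next states of $\Delta(s,\overline\sigma)$ is nonempty, then $i$ lies in none of the filters of $\Delta(s,\overline\sigma)$. It accepts $(w_1,\ldots,w_n)$ as follows: the words are written on $n$ tapes with a head on each; the symbol under head $i$ is the next unread letter of $w_i$, or $\$$ if $w_i$ is fully read. Starting in a state of $S_0$, at a state $s$ with current symbol tuple $\overline\sigma$, if $\Delta(s,\overline\sigma)=(T,X)$ one may choose a filter $\chi\in X$ and a state $t\in T$, advance the heads with index in $\chi$ by one position, and move to $t$. The tuple is accepted if some such run reads all tapes completely and ends in a state of $S_f$. A DFAA is an FAA in which $|X|\le1$ whenever $\Delta(s,\overline\sigma)=(T,X)$.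 An SAA (non-deterministic semi-sorted asynchronous automaton) is a non-deterministic finite state automaton over $A\sqcup\{\$\}$ (possibly several start states and $\epsilon$-transitions) with a partition of its states into $S_1,\ldots,S_n$; it accepts $(w_1,\ldots,w_n)$ iff there is a path from a start state to an accept state reading a shuffle of $(w_1\$,\ldots,w_n\$)$ (an ordering of all letters respecting the order in each word), where a transition out of a state in $S_i$ reads the next letter of tape $i$. *)

(* Defs.v *)
From mathcomp Require Import all_boot.
Set Implicit Arguments.
Unset Strict Implicit.
Unset Printing Implicit Defensive.

Inductive star (T : Type) (R : T -> T -> Prop) : T -> T -> Prop :=
| star_refl x : star R x x
| star_step x y z : R x y -> star R y z -> star R x z.

Section Automata.
Variables (A : finType) (n : nat).

Definition words := 'I_n -> seq A.

(* Symbol tuples over A ⊔ {$}; [None] encodes the padding symbol $. *)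
Definition symtuple := {ffun 'I_n -> option A}.
Definition all_dollar (sg : symtuple) : bool := [forall i, sg i == None].

Definition conf (S : Type) := (S * ('I_n -> nat))%type.

(* delta is only relevant on A^$ (non all-$ tuples); its value on the
   all-$ tuple is never used. *)
Record faa (S : finType) := FAA {
  faa_start : {set S};
  faa_final : {set S};
  faa_delta : S -> symtuple -> {set S} * {set {set 'I_n}} }.

Definition faa_wf (S : finType) (M : faa S) : Prop :=
  forall s (sg : symtuple), ~~ all_dollar sg ->
    set0 \notin (faa_delta M s sg).2 /\
    (forall i, sg i = None -> (faa_delta M s sg).1 != set0 ->
       forall chi, chi \in (faa_delta M s sg).2 -> i \notin chi).

Definition dfaa_wf (S : finType) (M : faa S) : Prop :=
  faa_wf M /\
  forall s (sg : symtuple), ~~ all_dollar sg -> #|(faa_delta M s sg).2| <= 1.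

(* Symbol under each head: next unread letter, or $ if the word is read. *)
Definition cur_sym (w : words) (p : 'I_n -> nat) : symtuple :=
  [ffun i => onth (w i) (p i)].

Definition faa_step (S : finType) (M : faa S) (w : words) (c c' : conf S) : Prop :=
  let sg := cur_sym w c.2 in
  ~~ all_dollar sg /\
  exists chi, chi \in (faa_delta M c.1 sg).2 /\ c'.1 \in (faa_delta M c.1 sg).1 /\
    c'.2 = (fun i => c.2 i + (i \in chi)).

Definition faa_accepts (S : finType) (M : faa S) (w : words) : Prop :=
  exists s0 sf p, s0 \in faa_start M /\ sf \in faa_final M /\
    star (faa_step M w) (s0, fun _ => 0) (sf, p) /\
    (forall i, p i = size (w i)).

(* An NFA over A ⊔ {$} with epsilon-transitions: labels are
   [None] = epsilon, [Some None] = $, [Some (Some a)] = a.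
   [saa_part s = i] means s belongs to the block S_i of the partition. *)
Record saa (S : finType) := SAA {
  saa_start : {set S};
  saa_final : {set S};
  saa_part : S -> 'I_n;
  saa_trans : S -> option (option A) -> {set S} }.

Definition padded (u : seq A) : seq (option A) := rcons (map Some u) None.

Definition saa_step (S : finType) (M : saa S) (w : words) (c c' : conf S) : Prop :=
  (c'.1 \in saa_trans M c.1 None /\ c'.2 = c.2) \/
  (exists x, onth (padded (w (saa_part M c.1))) (c.2 (saa_part M c.1)) = Some x /\
     c'.1 \in saa_trans M c.1 (Some x) /\
     c'.2 = (fun i => c.2 i + (i == saa_part M c.1))).

Definition saa_accepts (S : finType) (M : saa S) (w : words) : Prop :=
  exists s0 sf p, s0 \in saa_start M /\ sf \in saa_final M /\
    star (saa_step M w) (s0, fun _ => 0) (sf, p) /\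
    (forall i, p i = size (padded (w i))).

End Automata.

(* Main.v *)
Require Import Defs.
From mathcomp Require Import all_boot.
From Stdlib Require Import ClassicalEpsilon FunctionalExtensionality.
From mathcomp Require Import zify.
Set Implicit Arguments.
Unset Strict Implicit.
Unset Printing Implicit Defensive.

Definition pb (P : Prop) : bool :=
  if excluded_middle_informative P then true else false.
Lemma pbP (P : Prop) : reflect P (pb P).
Proof. rewrite /pb; case: excluded_middle_informative => h; constructor; done. Qed.

Lemma star_trans T (R : T -> T -> Prop) x y z : star R x y -> star R y z -> star R x z.
Proof. elim=> [//|a b c Rab _ IH] /IH; exact: star_step. Qed.
Lemma star_one T (R : T -> T -> Prop) x y : R x y -> star R x y.
Proof. move=> h; apply: star_step h (star_refl _ _). Qed.

Lemma star_sim T1 T2 (R1 : T1 -> T1 -> Prop) (R2 : T2 -> T2 -> Prop) (f : T1 -> T2 -> Prop) :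
 (forall x y x', f x x' -> R1 x y -> exists2 y', f y y' & star R2 x' y') ->
 forall x y, star R1 x y -> forall x', f x x' -> exists2 y', f y y' & star R2 x' y'.
Proof.
move=> H x y; elim=> [a|a b c Rab _ IH] x' fx; first by exists x'; [|exact: star_refl].
have [b' fb sb] := H _ _ _ fx Rab; have [c' fc sc] := IH _ fb.
by exists c'; [|exact: star_trans sb sc].
Qed.

Lemma onth_padded (A : finType) (u : seq A) m :
  onth (padded u) m = if m <= size u then Some (onth u m) else None.
Proof.
rewrite /padded; elim: u m => [|a u IH] [|m] /=; try done.
all: by rewrite ?IH ?onth0n.
Qed.

Section Det.
Variables (A : finType) (n : nat) (S : finType) (M : faa A n S).

Definition det_faa : faa A n (S * {set 'I_n})%type :=
  FAA [set x | x.1 \in faa_start M] [set x | x.1 \in faa_final M]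
   (fun x sg => if x.2 \in (faa_delta M x.1 sg).2
                then ([set y | y.1 \in (faa_delta M x.1 sg).1], [set x.2])
                else (set0, set0)).

Lemma det_wf : faa_wf M -> dfaa_wf det_faa.
Proof.
move=> wf; split=> [s sg nd|s sg nd]; rewrite /=; case: ifP => hin //=;
  last by rewrite cards0.
- have [h0 h1] := wf s.1 sg nd.
  split; first by rewrite in_set1; apply/eqP => e; rewrite -e in hin; by rewrite hin in h0.
  move=> i si /set0Pn [y]; rewrite inE => hy chi; rewrite in_set1 => /eqP ->.
  apply: h1 => //; apply/set0Pn; by exists y.1.
- split; first by rewrite in_set0.
  by move=> i _ _ chi; rewrite in_set0.
- by rewrite cards1.
Qed.

Lemma det_back w c c' : star (faa_step M w) c c' ->
  exists chi chi', star (faa_step det_faa w) ((c.1, chi), c.2) ((c'.1, chi'), c'.2).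
Proof.
elim=> [x|x y z [nd [chi [hchi [hy hp]]]] _ [chi1 [chi' IH]]].
  by exists set0, set0; apply: star_refl.
exists chi, chi'; apply: star_step IH; split => //=.
exists chi; rewrite /= hchi !inE; split=> //.
Qed.

Lemma det_accepts w : faa_accepts det_faa w <-> faa_accepts M w.
Proof.
split.
- move=> [s0 [sf [p [h0 [hf [hs hp]]]]]].
  have := @star_sim _ _ (faa_step det_faa w) (faa_step M w)
     (fun x x' => x' = (x.1.1, x.2)) _ _ _ hs _ erefl.
  case.
    move=> x y x' -> [nd [chi [hchi [hy hp']]]].
    exists (y.1.1, y.2) => //; apply: star_one; split => //.
    move: hchi hy; rewrite /=; case: ifP => hin; last by rewrite in_set0.
    rewrite !inE => /eqP e hy; subst chi.
    by exists x.1.2.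
  move=> y' -> hs'; exists s0.1, sf.1, p; move: h0 hf; rewrite !inE => h0 hf.
  by do 3 (split => //).
- move=> [s0 [sf [p [h0 [hf [hs hp]]]]]].
  have [chi [chi' hs']] := det_back hs.
  exists (s0, chi), (sf, chi'), p; rewrite !inE; by do 3 (split => //).
Qed.
End Det.
Section OfSAA.
Variables (A : finType) (n : nat) (S : finType) (M : saa A n S).
Implicit Types (sg : symtuple A n).

Definition silent1 sg (x y : S * {set 'I_n}) : Prop :=
  (y.1 \in saa_trans M x.1 None /\ y.2 = x.2) \/
  (saa_part M x.1 \notin x.2 /\ sg (saa_part M x.1) = None /\
   y.1 \in saa_trans M x.1 (Some None) /\ y.2 = saa_part M x.1 |: x.2).
Definition silent sg := star (silent1 sg).
Definition dollars : symtuple A n := [ffun _ => None].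

Definition sfaa : faa A n ((S * {set 'I_n}) * 'I_n)%type :=
  FAA [set x | (x.1.1 \in saa_start M) && (x.1.2 == set0)]
      [set x | pb (exists sf, sf \in saa_final M /\ silent dollars x.1 (sf, setT))]
      (fun x sg => match sg x.2 with
        | Some a => ([set y | pb (exists z, silent sg x.1 z /\ saa_part M z.1 = x.2 /\
                       y.1.1 \in saa_trans M z.1 (Some (Some a)) /\ y.1.2 = z.2)],
                     [set [set x.2]])
        | None => (set0, set0) end).

Lemma sfaa_wf : faa_wf sfaa.
Proof.
move=> x sg nd /=; case E: (sg x.2) => [a|].
  split.
    rewrite in_set1; apply/eqP => /setP /(_ x.2); by rewrite !inE eqxx.
  move=> i si _ chi; rewrite in_set1 => /eqP ->; rewrite in_set1.
  by apply/eqP => e; rewrite e E in si.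
split; first by rewrite in_set0.
by move=> i _ _ chi; rewrite in_set0.
Qed.

Variable w : words A n.
Hypothesis hn : 0 < n.
Notation sz i := (size (w i)).
Definition Dp (p : 'I_n -> nat) : {set 'I_n} := [set i | p i == (sz i).+1].
Definition qp (p : 'I_n -> nat) : 'I_n -> nat := fun i => minn (p i) (sz i).

Lemma cur_sym_end : cur_sym w (fun i => sz i) = dollars.
Proof. by apply/ffunP => i; rewrite !ffunE onth_default. Qed.

Lemma sfaa_back c c' : star (saa_step M w) c c' ->
  c'.1 \in saa_final M -> (forall i, c'.2 i = (sz i).+1) ->
  (forall i, c.2 i <= (sz i).+1) ->
  forall x0, silent (cur_sym w (qp c.2)) x0 (c.1, Dp c.2) ->
  exists j y, y \in faa_final sfaa /\
     star (faa_step sfaa w) ((x0, j), qp c.2) (y, fun i => sz i).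
Proof.
elim=> [x|x y z hst _ IH] hf hp hv x0 hsil.
  have hq : qp x.2 = fun i => sz i.
    by apply: functional_extensionality => i; rewrite /qp hp; lia.
  have hD : Dp x.2 = setT by apply/setP => i; rewrite !inE hp eqxx.
  exists (Ordinal hn), (x0, Ordinal hn); rewrite hq; split; last exact: star_refl.
  rewrite inE; apply/pbP; exists x.1; split => //.
  by rewrite -hD -cur_sym_end -hq.
case: hst => [[hy hyp]|[l [hon [hy hyp]]]].
  move: IH; rewrite hyp => IH; apply: IH => //.
  apply: star_trans hsil (star_one _); left; by split.
set k := saa_part M x.1 in hon hy hyp.
rewrite onth_padded in hon; case: ifP hon => hle // [] hl.
have hv' : forall i, y.2 i <= (sz i).+1.
  by move=> i; rewrite hyp /=; have := hv i; case: (eqVneq i k) => [->|_]; lia.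
case: l hl hy => [a|] hl hy.
- have hlt : x.2 k < sz k by have := onthTE (w k) (x.2 k); rewrite hl.
  have hD : Dp y.2 = Dp x.2.
    apply/setP => i; rewrite !inE hyp; case: (eqVneq i k) => [->|_]; lia.
  have hq : qp y.2 = fun i => qp x.2 i + (i \in [set k]).
    apply: functional_extensionality => i; rewrite /qp hyp in_set1.
    case: (eqVneq i k) => [->|_]; lia.
  have [j [fin [hfin hstar]]] := IH hf hp hv' (y.1, Dp x.2) (ltac:(rewrite hD; exact: star_refl)).
  exists k, fin; split => //; apply: star_step hstar.
  have hsk : cur_sym w (qp x.2) k = Some a.
    by rewrite ffunE /qp (minn_idPl (ltnW hlt)).
  rewrite /faa_step /= hsk; split.
    by apply/forallP => /(_ k); rewrite hsk.
  exists [set k]; rewrite in_set1 eqxx; split => //; split => //.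
  rewrite inE; apply/pbP; exists (x.1, Dp x.2); split => //.
- have ek : x.2 k = sz k by have := onthTE (w k) (x.2 k); rewrite hl /=; lia.
  have hD : Dp y.2 = k |: Dp x.2.
    apply/setP => i; rewrite !inE hyp; case: (eqVneq i k) => [->|_]; lia.
  have hq : qp y.2 = qp x.2.
    apply: functional_extensionality => i; rewrite /qp hyp.
    case: (eqVneq i k) => [->|_]; lia.
  move: IH; rewrite hq hD => IH; apply: IH => //; apply: star_trans hsil (star_one _); right.
  split; first by rewrite inE ek eqn_leq ltnn andbF.
  split; first by rewrite ffunE /qp ek minnn onth_default.
  by split.
Qed.

Definition Iv (q : 'I_n -> nat) (D : {set 'I_n}) (p : 'I_n -> nat) :=
  forall i, q i <= sz i /\ p i = q i + (i \in D) /\ (i \in D -> q i = sz i).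

Lemma silent_fwd sg x z : silent sg x z -> forall q p, sg = cur_sym w q ->
  Iv q x.2 p -> exists p', star (saa_step M w) (x.1, p) (z.1, p') /\ Iv q z.2 p'.
Proof.
elim=> [x0|x0 y z0 h1 _ IH] q p hsg hI; first by exists p; split => //; exact: star_refl.
case: h1 => [[hy hy2]|[hk [hsk [hy hy2]]]].
  have [p' [hs hI']] := IH q p hsg (ltac:(by rewrite hy2)).
  exists p'; split => //; apply: star_step hs; by left.
set k := saa_part M x0.1 in hk hsk hy hy2.
have [hle [hpk _]] := hI k.
have eq : q k = sz k.
  move: hsk; rewrite hsg ffunE => h; have := onthTE (w k) (q k); rewrite h /=; lia.
have hI2 : Iv q y.2 (fun i => p i + (i == k)).
  move=> i; have [hle' [hpi hD]] := hI i; rewrite hy2 in_setU1; split => //.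
  case: (eqVneq i k) => [->|ne] /=.
    by split; [rewrite hpk (negbTE hk) addn0 | move=> _; exact: eq].
  by rewrite addn0; split.
have [p' [hs hI']] := IH q _ hsg hI2.
exists p'; split => //; apply: star_step hs; right; exists None.
split; first by rewrite /= -/k hpk (negbTE hk) addn0 onth_padded eq leqnn onth_default.
by split.
Qed.

Lemma sfaa_step_sim x y x' : (x'.1 = x.1.1.1 /\ Iv x.2 x.1.1.2 x'.2) ->
  faa_step sfaa w x y ->
  exists2 y', (y'.1 = y.1.1.1 /\ Iv y.2 y.1.1.2 y'.2) & star (saa_step M w) x' y'.
Proof.
case: x => [[x0 k] q]; case: y => [[y0 j] q']; case: x' => [s p] /= [-> hI].
move=> [nd [chi [hchi [hy hq']]]]; rewrite /= in hq'; subst q'; move: hchi hy; rewrite /=.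
case E: (cur_sym w q k) => [a|]; last by rewrite in_set0.
rewrite !inE => /eqP echi /pbP [z [hs [hpart [htr hz2]]]]; subst chi.
have [p' [hs' hI']] := silent_fwd hs erefl hI.
have hlt : q k < sz k by move: E; rewrite ffunE => h; have := onthTE (w k) (q k); rewrite h.
have hkz : k \notin z.2.
  by apply/negP => hk; have [_ [_ hh]] := hI' k; move: hlt; rewrite hh // ltnn.
have hpk : p' k = q k by have [_ [h _]] := hI' k; rewrite h (negbTE hkz) addn0.
exists (y0.1, fun i => p' i + (i == k)).
  split => // i; rewrite /= hz2 in_set1; have [h1 [h2 h3]] := hI' i.
  case: (eqVneq i k) => [->|ne] /=.
    by rewrite (negbTE hkz) hpk addn0 addn1; split.
  by rewrite !addn0.
apply: star_trans hs' (star_one _); right; exists (Some a); rewrite hpart.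
split; last by [].
by rewrite /= hpk onth_padded (ltnW hlt); move: E; rewrite ffunE => ->.
Qed.

Lemma sfaa_accepts : faa_accepts sfaa w <-> saa_accepts M w.
Proof.
split.
- move=> [[[a D] j] [sf [p [h0 [hf [hs hp]]]]]].
  move: h0; rewrite inE /= => /andP [ha /eqP hD].
  have hI0 : Iv (fun _ => 0) D (fun _ => 0) by move=> i; rewrite hD in_set0.
  have [y' [hy1 hI] hs'] := @star_sim _ _ _ (saa_step M w)
     (fun x x' => x'.1 = x.1.1.1 /\ Iv x.2 x.1.1.2 x'.2) sfaa_step_sim _ _ hs
     (a, fun _ => 0) (conj erefl hI0).
  move: hf; rewrite inE => /pbP [sf' [hsf' hsil]].
  have ep : p = fun i => sz i by apply: functional_extensionality.
  have [p'' [hs'' hI'']] := silent_fwd hsil (q := p) (ltac:(by rewrite ep cur_sym_end)) hI.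
  exists a, sf', p''; split => //; split => //; split.
    apply: star_trans hs' _; move: hy1 hs''; case: y' {hI} => a0 b0 /= -> //.
  by move=> i; have [_ [h _]] := hI'' i; rewrite h inE hp /padded size_rcons size_map addn1.
- move=> [s0 [sf [p [h0 [hf [hs hp]]]]]].
  have hp' : forall i, (sf, p).2 i = (sz i).+1.
    by move=> i; rewrite /= hp /padded size_rcons size_map.
  have hD : Dp (fun _ => 0) = set0 by apply/setP => i; rewrite !inE.
  have hq : qp (fun _ => 0) = fun _ => 0.
    by apply: functional_extensionality => i; rewrite /qp min0n.
  have [j [y [hy hst]]] := sfaa_back hs hf hp' (fun i => leq0n _) (x0 := (s0, set0))
      (ltac:(rewrite /= hD; exact: star_refl)).
  exists ((s0, set0), j), y, (fun i => sz i); rewrite inE /= h0 eqxx.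
  by rewrite hq in hst; do 3 (split => //).
Qed.
End OfSAA.
Section OfFAA.
Variables (A : finType) (n : nat) (S : finType) (M : faa A n S).
Hypothesis hn : 0 < n.
Notation B := {ffun 'I_n -> option (option A)}.

Definition clearb (chi : {set 'I_n}) (b : B) : B := [ffun i => if i \in chi then None else b i].
Definition setb (k : 'I_n) l (b : B) : B := [ffun i => if i == k then Some l else b i].

Definition ffaa_eps (x y : (S * B) * 'I_n) : Prop :=
  exists sg : symtuple A n, (forall i, x.1.2 i = Some (sg i)) /\ ~~ all_dollar sg /\
    exists chi, chi \in (faa_delta M x.1.1 sg).2 /\ y.1.1 \in (faa_delta M x.1.1 sg).1 /\
      y.1.2 = clearb chi x.1.2.

Definition ssaa : saa A n ((S * B) * 'I_n)%type :=
  SAA [set x | (x.1.1 \in faa_start M) && (x.1.2 == [ffun _ => None])]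
      [set x | (x.1.1 \in faa_final M) && (x.1.2 == [ffun _ => Some None])]
      (fun x => x.2)
      (fun x o => match o with
        | None => [set y | (y.1 == x.1) || pb (ffaa_eps x y)]
        | Some l => [set y | (x.1.2 x.2 == None) && (y == ((x.1.1, setb x.2 l x.1.2), x.2))]
        end).

Variable w : words A n.
Notation sz i := (size (w i)).

Definition J (q : 'I_n -> nat) (b : B) (p : 'I_n -> nat) :=
  forall i, (b i = None -> p i = q i) /\
            (forall l, b i = Some l -> p i = (q i).+1 /\ l = onth (w i) (q i)).

Lemma ssaa_step_sim x y x' : (x'.1 = x.1.1.1 /\ J x'.2 x.1.1.2 x.2) ->
  saa_step ssaa w x y ->
  exists2 y', (y'.1 = y.1.1.1 /\ J y'.2 y.1.1.2 y.2) & star (faa_step M w) x' y'.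
Proof.
case: x => [[[s b] k] p]; case: y => [[[t b'] k'] p']; case: x' => [s' q] /= [-> hJ].
case => [[/= hy ->]|[l [/= hon [hy ->]]]].
- move: hy; rewrite inE => /orP [/eqP [-> ->]|/pbP [sg [hb [nd [chi [hchi [ht hb']]]]]]].
    by exists (s, q) => //; exact: star_refl.
  rewrite /= in hb hchi ht hb'.
  have esg : sg = cur_sym w q.
    apply/ffunP => i; rewrite ffunE; have [_ h] := hJ i; by have [_ ->] := h _ (hb i).
  exists (t, fun i => q i + (i \in chi)).
    split => // i; rewrite hb' ffunE; have [_ h] := hJ i; have [hp hl] := h _ (hb i).
    case: ifP => hi; split => //.
    - by move=> _; rewrite /= hi hp addn1.
    - by rewrite hb.
    - by move=> l0; rewrite hb => -[<-]; rewrite /= hi addn0.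
  apply: star_one; rewrite /faa_step /= -esg; split => //; by exists chi.
- exists (s, q) => //; last exact: star_refl.
  move: hy; rewrite inE => /andP [/eqP hbk /eqP [-> -> _]] /=; split => // i.
  rewrite ffunE; case: (eqVneq i k) => [->|ne] /=.
    have [h _] := hJ k; rewrite (h hbk) addn1; split => // l0 [<-]; split => //.
    move: hon; rewrite onth_padded (h hbk); case: ifP => // _ [] //.
  by rewrite addn0; exact: hJ.
Qed.

Lemma ssaa_accepts_faa : saa_accepts ssaa w -> faa_accepts M w.
Proof.
move=> [[[s0 b0] k0] [[[sf bf] kf] [p [h0 [hf [hs hp]]]]]].
move: h0 hf; rewrite !inE /= => /andP [h0 /eqP eb0] /andP [hf /eqP ebf].
have hJ0 : J (fun _ => 0) b0 (fun _ => 0) by move=> i; rewrite eb0 ffunE.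
have [[s q] [/= -> hJ] hs'] := @star_sim _ _ _ (faa_step M w)
   (fun x x' => x'.1 = x.1.1.1 /\ J x'.2 x.1.1.2 x.2) ssaa_step_sim _ _ hs
   (s0, fun _ => 0) (conj erefl hJ0).
exists s0, sf, q; do 3 (split => //).
move=> i; have [_ h] := hJ i; have [h1 _] := h None (ltac:(by rewrite ebf ffunE)).
move: (hp i) h1; rewrite /padded size_rcons size_map => ->; lia.
Qed.

Lemma J_full (q : 'I_n -> nat) (b : B) (p : 'I_n -> nat) : (forall i, b i != None) -> J q b p ->
  forall i, b i = Some (onth (w i) (q i)).
Proof.
move=> hb hJ i; have := hb i; case E: (b i) => [l|] // _.
by have [_ h] := hJ i; have [_ ->] := h _ E.
Qed.

Lemma fill k : forall (b : B) (s : S) (j : 'I_n) (q p : 'I_n -> nat), #|[set i | b i == None]| <= k ->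
  (forall i, q i <= sz i) -> J q b p ->
  exists (b' : B) (p' : 'I_n -> nat) (j' : 'I_n), (forall i, b' i = Some (onth (w i) (q i))) /\ J q b' p' /\
    star (saa_step ssaa w) (((s, b), j), p) (((s, b'), j'), p').
Proof.
elim: k => [|k IH] b s j q p hc hq hJ.
  exists b, p, j; split; last by split => //; exact: star_refl.
  apply: J_full hJ => i; apply/negP => /eqP hi.
  by move: hc; rewrite leqn0 cards_eq0 => /eqP /setP /(_ i); rewrite !inE hi.
case: (pickP (fun i => b i == None)) => [i /eqP hi|none]; last first.
  exists b, p, j; split; last by split => //; exact: star_refl.
  by apply: J_full hJ => i; rewrite none.
set l := onth (w i) (q i).
have hpi : p i = q i by have [h _] := hJ i; exact: h.
have hJ' : J q (setb i l b) (fun i0 => p i0 + (i0 == i)).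
  move=> i0; rewrite ffunE; case: (eqVneq i0 i) => [->|ne] //=.
    by split => // l0 [<-]; rewrite hpi addn1.
  by rewrite addn0; exact: hJ.
have hc' : #|[set i0 | setb i l b i0 == None]| <= k.
  have -> : [set i0 | setb i l b i0 == None] = [set i0 | b i0 == None] :\ i.
    apply/setP => i0; rewrite !inE ffunE; by case: (eqVneq i0 i) => [->|].
  move: hc; rewrite (cardsD1 i [set i0 | b i0 == None]) inE hi eqxx /=; lia.
have [b' [p' [j' [hb' [hJ'' hs]]]]] := IH _ s i _ _ hc' hq hJ'.
exists b', p', j'; split => //; split => //.
apply: (@star_step _ _ _ (((s, b), i), p)) (star_step _ hs).
  by left; split => //; rewrite inE eqxx.
right; exists l; split.
  by rewrite /= hpi onth_padded hq.
by rewrite /= inE hi eqxx.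
Qed.

Hypothesis wf : faa_wf M.

Lemma faa_step_sim x y x' :
  (x'.1.1.1 = x.1 /\ (forall i, x.2 i <= sz i) /\ J x.2 x'.1.1.2 x'.2) ->
  faa_step M w x y ->
  exists2 y', (y'.1.1.1 = y.1 /\ (forall i, y.2 i <= sz i) /\ J y.2 y'.1.1.2 y'.2)
    & star (saa_step ssaa w) x' y'.
Proof.
case: x => [s q]; case: y => [t q']; case: x' => [[[s' b] j] p] /= [-> [hq hJ]].
move=> [nd [chi [hchi [ht /= hq']]]]; subst q'; rewrite /= in nd hchi ht.
have [b' [p' [j' [hb' [hJ' hs]]]]] := @fill _ b s j q p (leqnn _) hq hJ.
set sg := cur_sym w q in nd hchi ht.
have hchi_ok : forall i, i \in chi -> q i < sz i.
  move=> i hi; have [_ h] := wf s nd.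
  case E: (sg i) => [a|].
    by move: E; rewrite ffunE => h'; have := onthTE (w i) (q i); rewrite h'.
  have := h i E (ltac:(by apply/set0Pn; exists t)) chi hchi; by rewrite hi.
exists (((t, clearb chi b'), j'), p').
  split => //; split.
    move=> i /=; case: (boolP (i \in chi)) => hi; [have := hchi_ok i hi; lia | by rewrite addn0].
  move=> i /=; rewrite ffunE; have [_ h] := hJ' i; have [hp hl] := h _ (hb' i).
  case: (boolP (i \in chi)) => hi; split => //.
  - by move=> _; rewrite hp addn1.
  - by rewrite hb'.
  - by move=> l0; rewrite hb' => -[<-]; rewrite addn0.
apply: star_trans hs (star_one _); left; split => //.
rewrite inE /=; apply/orP; right; apply/pbP; exists sg; split.
  by move=> i /=; rewrite hb' ffunE.
split => //; exists chi; split => //.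
Qed.

Lemma faa_accepts_ssaa : faa_accepts M w -> saa_accepts ssaa w.
Proof.
move=> [s0 [sf [p [h0 [hf [hs hp]]]]]].
have hJ0 : J (fun _ => 0) [ffun _ => None] (fun _ => 0) by move=> i; rewrite ffunE.
have [[[[s b] j] p'] [/= e [hq hJ]] hs'] := @star_sim _ _ _ (saa_step ssaa w) _ faa_step_sim _ _ hs
   (((s0, [ffun _ => None]), Ordinal hn), fun _ => 0) (conj erefl (conj (fun i => leq0n _) hJ0)).
subst s.
have [b' [p'' [j' [hb' [hJ' hs'']]]]] := @fill _ b sf j p p' (leqnn _) hq hJ.
exists ((s0, [ffun _ => None]), Ordinal hn), ((sf, b'), j'), p''.
split; first by rewrite inE /= h0 eqxx.
split.
  rewrite inE /= hf; apply/eqP/ffunP => i; by rewrite hb' ffunE hp onth_default.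
split; first exact: star_trans hs' hs''.
move=> i; have [_ h] := hJ' i; have [-> _] := h _ (hb' i).
by rewrite hp /padded size_rcons size_map.
Qed.
End OfFAA.
Theorem mainTheorem7 (A : finType) (n : nat) (hn : 0 < n)
    (L : ('I_n -> seq A) -> Prop) :
  ((exists (S : finType) (M : faa A n S),
       faa_wf M /\ forall w, faa_accepts M w <-> L w) <->
   (exists (S : finType) (M : faa A n S),
       dfaa_wf M /\ forall w, faa_accepts M w <-> L w)) /\
  ((exists (S : finType) (M : faa A n S),
       faa_wf M /\ forall w, faa_accepts M w <-> L w) <->
   (exists (S : finType) (M : saa A n S),
       forall w, saa_accepts M w <-> L w)).
Proof.
split; split.
- move=> [S [M [wf hL]]]; eexists; exists (det_faa M); split; first exact: det_wf.
  by move=> w; rewrite det_accepts.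
- by move=> [S [M [[wf _] hL]]]; exists S, M.
- move=> [S [M [wf hL]]]; eexists; exists (ssaa M) => w; split => h.
    by apply/hL; apply: ssaa_accepts_faa h.
  by apply: faa_accepts_ssaa => //; apply/hL.
- move=> [S [M hL]]; eexists; exists (sfaa M); split; first exact: sfaa_wf.
  by move=> w; rewrite sfaa_accepts.
Qed.
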